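(* Let $\mathcal{I}$ be a distributive interval hypergraph on $[n]$, $A$ an acyclic orientation of $\mathcal{I}$, and $J\in\mathcal{I}$ with $j=A(J)\ne\min(J)$. Then there exists $i$ with \[ \min(J)\le i\le\max\{\max(I): I\in\mathcal{I},\ \min(I)=\min(J),\ \max(I)<j\} \] such that the orientation $B$ obtained from $A$ by flipping $j$ to $i$ (i.e. $B(H)=i$ if $A(H)=j$ and $i\in H$, and $B(H)=A(H)$ otherwise) is acyclic.
   Context: An interval hypergraph $\mathcal{I}$ on $[n]$ is a collection of intervals of $[n]$ containing all singletons. It is distributive if for all $I,J\in\mathcal{I}$ with $I\not\subseteq J$, $I\not\supseteq J$ and $I\cap J\ne\varnothing$, the intersection $I\cap J$ is in $\mathcal{I}$ and is initial or final (i.e. shares its minimum or its maximum) in every $K\in\mathcal{I}$ with $I\cap J\subseteq K$. An orientation is a map $O:\mathcal{I}\to[n]$ with $O(I)\in I$; it is acyclic if there are no $H_1,\dots,H_k$, $k\ge2$, with $O(H_{i+1})\in H_i\setminus\{O(H_i)\}$ for $i\in[k-1]$ and $O(H_1)\in H_k\setminus\{O(H_k)\}$. *)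

(* Defs.v *)
From mathcomp Require Import all_boot.
Set Implicit Arguments. Unset Strict Implicit. Unset Printing Implicit Defensive.

(* Ground set [n] is modelled as 'I_n = {0,...,n-1} (shift by one). *)

Definition imin n (S : {set 'I_n}) : nat := \big[minn/n]_(i in S) (i : nat).
Definition imax n (S : {set 'I_n}) : nat := \max_(i in S) (i : nat).

Definition is_interval n (S : {set 'I_n}) : Prop :=
  S != set0 /\
  forall x y z : 'I_n, x \in S -> z \in S -> x <= y -> y <= z -> y \in S.

Definition interval_hypergraph n (HG : {set {set 'I_n}}) : Prop :=
  (forall S, S \in HG -> is_interval S) /\ (forall x : 'I_n, [set x] \in HG).

Definition distributive n (HG : {set {set 'I_n}}) : Prop :=
  forall I J, I \in HG -> J \in HG ->
    ~~ (I \subset J) -> ~~ (J \subset I) -> I :&: J != set0 ->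
    (I :&: J \in HG) /\
    (forall K, K \in HG -> I :&: J \subset K ->
       imin (I :&: J) = imin K \/ imax (I :&: J) = imax K).

Definition is_orientation n (HG : {set {set 'I_n}}) (O : {set 'I_n} -> 'I_n) : Prop :=
  forall H, H \in HG -> O H \in H.

Definition orel n (O : {set 'I_n} -> 'I_n) : rel {set 'I_n} :=
  fun H H' => O H' \in H :\ O H.

Definition acyclic n (HG : {set {set 'I_n}}) (O : {set 'I_n} -> 'I_n) : Prop :=
  forall s : seq {set 'I_n}, all (fun H => H \in HG) s -> 2 <= size s ->
    ~~ cycle (orel O) s.

Definition flip n (A : {set 'I_n} -> 'I_n) (j i : 'I_n) : {set 'I_n} -> 'I_n :=
  fun H => if (A H == j) && (i \in H) then i else A H.

(* Main.v *)
Require Import Defs.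
From mathcomp Require Import all_boot.
Set Implicit Arguments. Unset Strict Implicit. Unset Printing Implicit Defensive.

Section Imm.
Variable n : nat.
Implicit Types S : {set 'I_n}.

Lemma imin_le S (x : 'I_n) : x \in S -> imin S <= x.
Proof.
move=> xS; rewrite /imin -big_filter.
have : x \in [seq i <- index_enum 'I_n | i \in S] by rewrite mem_filter xS mem_index_enum.
elim: [seq _ <- _ | _] => //= a s IH; rewrite inE big_cons => /orP [/eqP <-|/IH h].
  by rewrite geq_minl.
by rewrite geq_min h orbT.
Qed.

Lemma imin_ge S c : c <= n -> (forall x, x \in S -> c <= x) -> c <= imin S.
Proof.
move=> cn H; rewrite /imin; elim/big_ind: _ => //.
  by move=> a b ha hb; rewrite leq_min ha hb.
Qed.

Lemma imin_mem S : S != set0 -> exists2 x : 'I_n, x \in S & imin S = x.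
Proof.
case/set0Pn=> x0 x0S.
have : imin S = n \/ exists2 x : 'I_n, x \in S & imin S = x.
  rewrite /imin; elim/big_ind: _ => //; first by left.
    by move=> a b ha hb /=; rewrite /minn; case: ifP.
  by move=> x xS; right; exists x.
case=> // Hn; have := imin_le x0S; rewrite Hn => h.
by have := ltn_ord x0; rewrite ltnNge h.
Qed.

Lemma imax_ge S (x : 'I_n) : x \in S -> x <= imax S.
Proof. by move=> xS; rewrite /imax; apply: (@leq_bigmax_cond _ (mem S) (fun i : 'I_n => (i : nat)) x). Qed.

Lemma imax_le S c : (forall x, x \in S -> x <= c) -> imax S <= c.
Proof. by move=> H; apply/bigmax_leqP => x /H. Qed.

Lemma imax_lt S c : 0 < c -> (forall x, x \in S -> x < c) -> imax S < c.
Proof.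
move=> c0 H; apply: (@leq_ltn_trans c.-1); last by rewrite prednK.
by apply: imax_le => x /H xc; rewrite -ltnS prednK.
Qed.

End Imm.

Lemma imax_mem n (S : {set 'I_n}) : S != set0 -> exists2 x : 'I_n, x \in S & imax S = x.
Proof.
move=> S0; have : 0 < #|S| by rewrite card_gt0.
case/(@eq_bigmax_cond _ (mem S) (fun i : 'I_n => (i : nat))) => x xS E; exists x => //.
Qed.

Section Gen.
Variables (n : nat) (HG : {set {set 'I_n}}) (O : {set 'I_n} -> 'I_n).

Definition vr : rel 'I_n := fun u w =>
  [exists G, [&& G \in HG, u \in G, O G == w & u != w]].

Lemma vrP u w : reflect (exists G, [/\ G \in HG, u \in G, O G = w & u != w]) (vr u w).
Proof.
apply: (iffP existsP) => [[G /and4P [a b /eqP c d]]|[G [a b c d]]]; exists G => //.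
by rewrite a b c eqxx d.
Qed.

Lemma chain (p : seq 'I_n) (x : 'I_n) : path vr x p -> p != [::] ->
  exists Q qs, [/\ all (fun H => H \in HG) (Q :: qs), O Q = last x p,
    path (orel O) Q qs, (x \in last Q qs) && (O (last Q qs) != x) & size qs = (size p).-1].
Proof.
elim: p x => // y p IH x /= /andP [/vrP [G [GH xG OG xy]] Hp] _.
case: p IH Hp => [|z p] IH Hp.
  by exists G, [::]; rewrite /= GH OG eq_sym xy xG.
have [//|Q [qs [Hall OQ Hpath /andP [yQ1 OQ1] Hsz]]] := IH y Hp.
exists Q, (rcons qs G); split.
- by move: Hall; rewrite /= all_rcons GH => /andP [-> ->].
- by rewrite OQ.
- by rewrite rcons_path Hpath /orel OG in_setD1 eq_sym OQ1 yQ1.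
- by rewrite last_rcons xG OG eq_sym.
- by rewrite size_rcons Hsz.
Qed.

Lemma L1 : acyclic HG O -> forall u w, vr u w -> connect vr w u -> False.
Proof.
move=> Hac u w e /connectP [p Hp Hu].
have Hp' : path vr u (w :: p) by rewrite /= e.
have [//|Q [qs [Hall OQ Hpath /andP [uQ1 OQ1] Hsz]]] := chain Hp'.
apply: (negP (Hac (Q :: qs) Hall _)).
  rewrite /= Hsz /=; case: p {Hp Hp' Hsz OQ} Hu => [/= Hu|]; last by [].
  by move: e; rewrite Hu; case/vrP => G [_ _ _]; rewrite eqxx.
by rewrite /= rcons_path Hpath /orel OQ /= -Hu in_setD1 eq_sym OQ1 uQ1.
Qed.

Lemma path_vr (x : {set 'I_n}) s : all (fun H => H \in HG) (x :: s) ->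
  path (orel O) x s -> connect vr (O (last x s)) (O x).
Proof.
elim: s x => [|y s IH] x /=; first by rewrite connect0.
move=> /and3P [xH yH Hs] /andP [e Hp].
apply: connect_trans (IH y _ Hp) _; first by rewrite /= yH.
apply: connect1; apply/vrP; exists x; move: e; rewrite /orel in_setD1.
by case/andP => a b; split.
Qed.

Lemma L2 : (forall u w, vr u w -> connect vr w u -> False) -> acyclic HG O.
Proof.
move=> H [|H1 [|H2 s]] // Hall _; apply/negP => /=.
move=> /andP [e Hp].
apply: (H (O H2) (O H1)).
  apply/vrP; exists H1; move: e; rewrite /orel in_setD1 => /andP [a b].
  by split => //; move: Hall => /andP [].
have := @path_vr H2 (rcons s H1).
rewrite last_rcons; apply => //.
by move: Hall => /= /and3P [a b c]; rewrite all_rcons b a c.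
Qed.

End Gen.

Lemma connect_pred (T : finType) (e : rel T) (x : T) (P : T -> Prop) :
  P x -> (forall a b, connect e x a -> P a -> e a b -> P b) ->
  forall y, connect e x y -> P y.
Proof.
move=> Px H y /connectP [p Hp ->]; elim/last_ind: p Hp => // p b IH.
rewrite rcons_path last_rcons => /andP [Hp e1].
apply: (H (last x p)) => //; last exact: IH.
by apply/connectP; exists p.
Qed.

Section Main.
Variables (n : nat) (HG : {set {set 'I_n}}) (A : {set 'I_n} -> 'I_n) (J K0 : {set 'I_n}).
Hypotheses (Hiv : interval_hypergraph HG) (Hdist : distributive HG)
  (Hor : is_orientation HG A) (Hac : acyclic HG A) (HJ : J \in HG) (HK0 : K0 \in HG).
Let j := A J.
Let i := A K0.
Let m := imin J.
Let M := imax K0.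
Hypotheses (HmK0 : imin K0 = m) (HMj : M < j)
  (Hmax : forall K, K \in HG -> imin K = m -> imax K < j -> imax K <= M)
  (Hjm : (j : nat) != m).

Lemma ivm (S : {set 'I_n}) (x y z : 'I_n) : S \in HG -> x \in S -> z \in S -> x <= y -> y <= z -> y \in S.
Proof. by move=> SH; case: (Hiv.1 S SH) => _; apply. Qed.

Lemma ne0 (S : {set 'I_n}) : S \in HG -> S != set0.
Proof. by move=> SH; case: (Hiv.1 S SH). Qed.

Lemma jJ : j \in J. Proof. exact: Hor. Qed.
Lemma iK0 : i \in K0. Proof. exact: Hor. Qed.

Lemma mJ (x : 'I_n) : x \in J -> m <= x.
Proof. exact: imin_le. Qed.

Lemma mj : m < j.
Proof. rewrite ltn_neqAle eq_sym Hjm /=. exact: (mJ jJ). Qed.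

Lemma K0b (x : 'I_n) : x \in K0 -> m <= x /\ x <= M.
Proof. by move=> xK; rewrite -HmK0; split; [apply: imin_le|apply: imax_ge]. Qed.

Lemma mo_ex : exists2 mo : 'I_n, mo \in J & (mo : nat) = m.
Proof. by have [x xJ E] := imin_mem (ne0 HJ); exists x; rewrite // /m E. Qed.

Lemma inK0 (x : 'I_n) : m <= x -> x <= M -> x \in K0.
Proof.
move=> h1 h2.
have [a aK Ea] := imin_mem (ne0 HK0); have [b bK Eb] := imax_mem (ne0 HK0).
by apply: (ivm HK0 aK bK); rewrite -?Ea -?Eb ?HmK0.
Qed.

Lemma K0J (x : 'I_n) : x \in K0 -> x \in J.
Proof.
move=> /K0b [h1 h2]; have [mo moJ mom] := mo_ex.
apply: (ivm HJ moJ jJ); first by rewrite mom.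
by apply: ltnW; apply: leq_ltn_trans HMj.
Qed.

Lemma mi : m <= i. Proof. by case: (K0b iK0). Qed.
Lemma iM : i <= M. Proof. by case: (K0b iK0). Qed.
Lemma ij : i < j. Proof. exact: leq_ltn_trans iM HMj. Qed.

Lemma distA (I K : {set 'I_n}) (a b c : 'I_n) : I \in HG -> K \in HG ->
  a \in I -> a \notin K -> b \in K -> b \notin I -> c \in I -> c \in K ->
  (I :&: K \in HG) /\ (forall L, L \in HG -> I :&: K \subset L ->
       imin (I :&: K) = imin L \/ imax (I :&: K) = imax L).
Proof.
move=> IH KH aI aK bK bI cI cK; apply: Hdist => //.
- by apply/subsetPn; exists a.
- by apply/subsetPn; exists b.
- by apply/set0Pn; exists c; rewrite inE cI cK.
Qed.

Lemma below_j (G : {set 'I_n}) (c : 'I_n) : G \in HG -> c \in G -> c < j -> j \notin G ->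
  forall x : 'I_n, x \in G -> x < j.
Proof.
move=> GH cG cj jG x xG; rewrite ltnNge; apply/negP => jx.
by move: jG; rewrite (ivm GH cG xG (ltnW cj) jx).
Qed.

Lemma big_b (G : {set 'I_n}) (b : 'I_n) (mo : 'I_n) : (mo : nat) = m ->
  G \in HG -> j \notin G -> (forall x : 'I_n, x \in G -> x < j) ->
  b \in G -> M < b -> (mo \in G \/ i \in G) -> False.
Proof.
move=> mom GH jG Gj bG Mb Hor2.
have j0 : 0 < j by apply: leq_ltn_trans mj.
have mn : m < n by apply: ltn_trans mj (ltn_ord j).
have moJ : mo \in J.
  by have [mo' mo'J E] := mo_ex; have -> : mo = mo' by apply: val_inj; rewrite /= mom E.
have bJ : b \in J.
  apply: (ivm HJ moJ jJ); first by rewrite mom; apply: leq_trans (ltnW Mb); apply: leq_trans mi iM.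
  by apply: ltnW; apply: Gj.
case: (boolP (mo \in G)) => moG.
  case: (boolP [exists y in G, y < m]).
    case/existsP => y /andP [yG ym].
    have yJ : y \notin J by apply/negP => /mJ; rewrite leqNgt ym.
    have [GJH _] := distA GH HJ yG yJ jJ jG moG moJ.
    have e1 : imin (G :&: J) = m.
      apply/eqP; rewrite eqn_leq; apply/andP; split.
        by rewrite -mom; apply: imin_le; rewrite inE moG moJ.
      by apply: imin_ge => [|x]; [apply: ltnW | rewrite inE => /andP [_ /mJ]].
    have e2 : imax (G :&: J) < j by apply: imax_lt => // x; rewrite inE => /andP [/Gj].
    have := Hmax GJH e1 e2; rewrite leqNgt => /negP; apply.
    by apply: leq_trans Mb _; apply: imax_ge; rewrite inE bG bJ.
  rewrite negb_exists => /forallP Hy.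
  have e1 : imin G = m.
    apply/eqP; rewrite eqn_leq; apply/andP; split; first by rewrite -mom; apply: imin_le.
    apply: imin_ge => [|x xG]; first by apply: ltnW.
    by have := Hy x; rewrite xG /= -leqNgt.
  have := Hmax GH e1 (imax_lt j0 Gj); rewrite leqNgt => /negP; apply.
  by apply: leq_trans Mb _; apply: imax_ge.
have iG : i \in G by case: Hor2 => // moG'; rewrite moG' in moG.
have moK0 : mo \in K0 by apply: inK0; rewrite mom // (leq_trans mi iM).
have bK0 : b \notin K0 by apply/negP => /K0b [_]; rewrite leqNgt Mb.
have [_ Hd] := distA HK0 GH moK0 moG bG bK0 iK0 iG.
have : K0 :&: G \subset J by apply/subsetP => x; rewrite inE => /andP [/K0J].
case/(Hd J HJ) => [e|e].
  have : m < imin (K0 :&: G).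
    apply: imin_ge => // x; rewrite inE => /andP [/K0b [h1 _] xG].
    rewrite ltn_neqAle h1 andbT; apply/eqP => E.
    have E' : mo = x by apply: val_inj; rewrite /= mom E.
    by rewrite E' xG in moG.
  by rewrite e ltnn.
have : imax (K0 :&: G) <= M by apply: imax_le => x; rewrite inE => /andP [/K0b [_ h] _].
rewrite e => h; have := imax_ge jJ; rewrite leqNgt => /negP; apply.
by apply: leq_ltn_trans h HMj.
Qed.

Definition flipped (G : {set 'I_n}) := (A G == j) && (i \in G).
Let B := flip A j i.
Let vrA := vr HG A.
Let vrB := vr HG B.
Definition vu : rel 'I_n := fun u w =>
  [exists G, [&& G \in HG, ~~ flipped G, u \in G, A G == w & u != w]].
Definition flipE (u : 'I_n) := exists G, [/\ G \in HG, flipped G, u \in G & u != i].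

Lemma vuP u w : reflect (exists G, [/\ G \in HG, ~~ flipped G, u \in G, A G = w & u != w]) (vu u w).
Proof.
apply: (iffP existsP) => [[G /and5P [a b c /eqP d e]]|[G [a b c d e]]]; exists G => //.
by rewrite a b c d eqxx e.
Qed.

Lemma vu_vrA u w : vu u w -> vrA u w.
Proof. by case/vuP => G [a b c d e]; apply/vrP; exists G. Qed.

Lemma B_nf G : ~~ flipped G -> B G = A G.
Proof. by rewrite /B /flip /flipped => /negbTE ->. Qed.

Lemma vu_vrB u w : vu u w -> vrB u w.
Proof. by case/vuP => G [a b c d e]; apply/vrP; exists G; rewrite B_nf. Qed.

Lemma vrB_cases u w : vrB u w -> vu u w \/ (w = i /\ flipE u).
Proof.
case/vrP => G [a b c d]; case: (boolP (flipped G)) => fG.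
  have wi : w = i by rewrite -c /B /flip; move: fG; rewrite /flipped => ->.
  by right; split => //; exists G; rewrite -wi.
by left; apply/vuP; exists G; rewrite -B_nf.
Qed.

Lemma decomp_first x y : connect vrB x y -> connect vu x y \/
  (exists u', [/\ flipE u', connect vu x u' & connect vrB i y]).
Proof.
case/connectP => p; elim: p x => [|z p IH] x /=; first by move=> _ ->; left.
move=> /andP [e Hp] Hy; case: (IH z Hp Hy) => [c|[u' [f c1 c2]]].
  case: (vrB_cases e) => [e'|[zi f]].
    by left; apply: connect_trans (connect1 e') c.
  right; exists x; split => //; rewrite -zi; apply/connectP; by exists p.
case: (vrB_cases e) => [e'|[zi f']].
  by right; exists u'; split => //; apply: connect_trans (connect1 e') c1.
right; exists x; split => //; rewrite -zi; apply/connectP; by exists p.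
Qed.

Lemma decomp_last x y : connect vrB x y -> connect vu x y \/ connect vu i y.
Proof.
case/connectP => p; elim: p x => [|z p IH] x /=; first by move=> _ ->; left.
move=> /andP [e Hp] Hy; case: (IH z Hp Hy) => [c|c]; last by right.
case: (vrB_cases e) => [e'|[zi f]].
  by left; apply: connect_trans (connect1 e') c.
by right; rewrite -zi.
Qed.

Lemma vu_vrA_c x y : connect vu x y -> connect vrA x y.
Proof. by apply: connect_sub => a b /vu_vrA /connect1. Qed.

Lemma vu_vrB_c x y : connect vu x y -> connect vrB x y.
Proof. by apply: connect_sub => a b /vu_vrB /connect1. Qed.

Definition Inv (u : 'I_n) :=
  (exists G1, [/\ G1 \in HG, i \in G1, j \notin G1 & exists2 y : 'I_n, y \in G1 & y < m] /\ u < m)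
  \/ (exists x, vrA j x /\ connect vrA x u).

Lemma step_core G (a b : 'I_n) : G \in HG -> ~~ flipped G -> a \in G -> A G = b -> a != b ->
  (a = i \/ a < m) -> connect vrA i a ->
  vrA j b \/ (b < m /\ j \notin G) \/ b = i.
Proof.
move=> GH nfG aG AG ab Ha ca.
have [mo moJ mom] := mo_ex.
have aj : a < j by case: Ha => [->|am]; [exact: ij | exact: ltn_trans am mj].
case: (boolP (j \in G)) => jG.
  have iG : i \in G.
    case: Ha => [<- //|am]; apply: (ivm GH aG jG); last exact: ltnW ij.
    by apply: ltnW; apply: leq_trans am mi.
  have bj : j != b.
    apply/negP => /eqP jb; move: nfG; rewrite /flipped AG -jb eqxx iG.
    by [].
  by left; apply/vrP; exists G.
have Gj := below_j GH aG aj jG.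
have bG : b \in G by rewrite -AG; apply: Hor.
have [bm|mb] := ltnP b m; first by right; left.
have [bM|Mb] := leqP b M.
  have bK : b \in K0 by apply: inK0.
  case: (eqVneq b i) => [bi|bi]; first by right; right.
  exfalso; apply: (L1 Hac (u := b) (w := i)); first by apply/vrP; exists K0.
  apply: connect_trans ca (connect1 _); apply/vrP; exists G; split => //.
exfalso; apply: (big_b mom GH jG Gj bG Mb).
case: Ha => [<-|am]; [by right | left].
by apply: (ivm GH aG bG); rewrite mom // ltnW.
Qed.

Lemma Key u : connect vu i u -> flipE u -> False.
Proof.
move=> c; have : u = i \/ Inv u.
  move: u c; apply: connect_pred; first by left.
  move=> a b ca Pa Hv; case/vuP: Hv => G [GH nfG aG AG ab].
  have ca' := vu_vrA_c ca.
  case: Pa => [ai|[[G1 [[G1H iG1 jG1 Hy1] am]]|[x [jx cx]]]]; last first.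
  - right; right; exists x; split => //.
    apply: connect_trans cx (connect1 (vu_vrA _)); apply/vuP; exists G; split => //.
  - case: (step_core GH nfG aG AG ab (or_intror am) ca') => [jb|[[bm _]|bi]].
    + by right; right; exists b; split => //; apply: connect0.
    + by right; left; exists G1; split.
    + by left.
  - case: (step_core GH nfG aG AG ab (or_introl ai) ca') => [jb|[[bm jG]|bi]].
    + by right; right; exists b; split => //; apply: connect0.
    + by right; left; exists G; split => //; split => //; [rewrite -ai | exists b => //; rewrite -AG; apply: Hor].
    + by left.
case=> [ui|Iu] [H [HH /andP [/eqP AH iH] uH ui']]; first by rewrite ui eqxx in ui'.
have jH : j \in H by rewrite -AH; apply: Hor.
case: Iu => [[G1 [[G1H iG1 jG1 [y yG1 ym]] um]]|[x [jx cx]]].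
  have G1j := below_j G1H iG1 ij jG1.
  have yJ : y \notin J by apply/negP => /mJ; rewrite leqNgt ym.
  have [_ Hd] := distA G1H HJ yG1 yJ jJ jG1 iG1 (K0J iK0).
  have sub : G1 :&: J \subset H.
    apply/subsetP => x; rewrite inE => /andP [xG xJ]; apply: (ivm HH uH jH).
      by apply: ltnW; apply: leq_trans um (mJ xJ).
    by apply: ltnW; apply: G1j.
  case: (Hd H HH sub) => e.
    have h1 : m <= imin (G1 :&: J).
      by apply: imin_ge => [|x]; [apply: ltnW; apply: ltn_trans mj (ltn_ord j) | rewrite inE => /andP [_ /mJ]].
    have := imin_le uH; rewrite -e => h2.
    by have := leq_ltn_trans h1 (leq_ltn_trans h2 um); rewrite ltnn.
  have h1 : imax (G1 :&: J) < j.
    by apply: imax_lt => [|x]; [apply: leq_ltn_trans mj | rewrite inE => /andP [/G1j]].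
  by have := imax_ge jH; rewrite -e leqNgt h1.
case: (eqVneq u j) => [uj|uj].
  by apply: (L1 Hac jx); rewrite -uj.
apply: (L1 Hac (u := u) (w := j)); first by apply/vrP; exists H.
exact: connect_trans (connect1 jx) cx.
Qed.

Lemma B_acyclic : acyclic HG B.
Proof.
apply: L2 => u w e c.
suff [u0 [f0 c0]] : exists u0, flipE u0 /\ connect vrB i u0.
  by case: (decomp_last c0) => c1; exact: (Key c1 f0).
case: (decomp_first c) => [c1|[u' [f c1 c2]]].
  case: (vrB_cases e) => [e'|[wi f]].
    by exfalso; exact: (L1 Hac (vu_vrA e') (vu_vrA_c c1)).
  by exists u; split => //; rewrite -wi.
exists u'; split => //; apply: connect_trans c2 _.
exact: connect_trans (connect1 e) (vu_vrB_c c1).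
Qed.
End Main.

Theorem proposition5p23 (n : nat) (HG : {set {set 'I_n}})
  (A : {set 'I_n} -> 'I_n) (J : {set 'I_n}) :
  interval_hypergraph HG -> distributive HG ->
  is_orientation HG A -> acyclic HG A ->
  J \in HG -> (A J : nat) != imin J ->
  exists i : 'I_n,
    imin J <= i /\
    i <= \max_(K in HG | (imin K == imin J) && (imax K < A J)) imax K /\
    acyclic HG (flip A (A J) i).
Proof.
move=> Hiv Hdist Hor Hac HJ Hjm.
have [mo moJ mom] := imin_mem (ne0 Hiv HJ).
pose P := fun K : {set 'I_n} => (K \in HG) && ((imin K == imin J) && (imax K < A J)).
have PK1 : P [set mo].
  have e1 : imin [set mo] = mo.
    apply/eqP; rewrite eqn_leq imin_le ?set11 //=.
    by apply: imin_ge => [|x]; [apply: ltnW | rewrite inE => /eqP ->].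
  rewrite /P Hiv.2 e1 mom eqxx /=.
  apply: (@leq_ltn_trans mo); first by apply: imax_le => x; rewrite inE => /eqP ->.
  by rewrite -mom ltn_neqAle eq_sym Hjm /= imin_le //; apply: Hor.
case: (@arg_maxnP _ [set mo] P (@imax n) PK1) => K0 /and3P [K0H /eqP e lt] Hm.
exists (A K0); split; last split.
- by rewrite -e; apply: imin_le; apply: Hor.
- apply: leq_trans (imax_ge (Hor K0 K0H)) _.
  exact: (@leq_bigmax_cond _ P (@imax n) K0 (introT and3P (And3 K0H (introT eqP e) lt))).
- apply: B_acyclic => //.
  by move=> K KH eK lK; apply: Hm; rewrite /P KH eK eqxx lK.
Qed.
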